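(* Henson's graph $U_3$ satisfies property $\mathscr{D}_3$ but does not satisfy property $\mathscr{D}_4$.
   Context: Henson's graph $U_3$ is the countable triangle-free graph (unique up to isomorphism) with the extension property: for all disjoint finite sets $A,B\subseteq V(U_3)$ with $A$ independent there is a vertex $v\notin A\cup B$ adjacent to every vertex of $A$ and to no vertex of $B$. Property $\mathscr{D}_k$: for every $m\in\{1,\dots,k\}$ and every sequence $x_1,\dots,x_{3m}$ of (not necessarily distinct) vertices there is a vertex $y$ with $|\{i\in[3m]: x_iy\in E(G)\}|\ge m+1$. *)

(* Defs.v *)
From mathcomp Require Import all_boot.
Set Implicit Arguments. Unset Strict Implicit. Unset Printing Implicit Defensive.

Definition simple_graph (V : eqType) (E : rel V) : Prop :=
  (forall x y, E x y = E y x) /\ (forall x, ~~ E x x).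

Definition triangle_free (V : eqType) (E : rel V) : Prop :=
  forall x y z, ~ [&& E x y, E y z & E x z].

Definition independent (V : eqType) (E : rel V) (A : seq V) : Prop :=
  forall a b, a \in A -> b \in A -> ~~ E a b.

Definition henson3_extension (V : eqType) (E : rel V) : Prop :=
  forall A B : seq V,
    (forall x, x \in A -> x \notin B) -> independent E A ->
    exists v, [/\ v \notin A, v \notin B,
                  (forall a, a \in A -> E a v) &
                  (forall b, b \in B -> ~~ E b v)].

(* G is (a copy of) Henson's graph U_3: countable, simple, triangle-free,
   with the extension property (unique up to isomorphism). *)
Definition is_henson_U3 (V : countType) (E : rel V) : Prop :=
  [/\ simple_graph E, triangle_free E & henson3_extension E].

Definition prop_D (V : eqType) (E : rel V) (k : nat) : Prop :=
  forall m, 1 <= m <= k ->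
    forall x : 'I_(3 * m) -> V,
      exists y : V, m.+1 <= #|[pred i : 'I_(3 * m) | E (x i) y]|.

(* Main.v *)
Require Import Defs.
From mathcomp Require Import all_boot zify.
Set Implicit Arguments. Unset Strict Implicit. Unset Printing Implicit Defensive.

Definition indepS (T : finType) (e : rel T) (S : {set T}) :=
  forall i j, i \in S -> j \in S -> ~~ e i j.

Fixpoint tri k := if k is k'.+1 then tri k' + k else 0.

Section R.
Variables (T : finType) (e : rel T).
Hypothesis esym : forall x y, e x y = e y x.
Hypothesis eirr : forall x, ~~ e x x.
Hypothesis etri : forall x y z, ~ [&& e x y, e y z & e x z].

Lemma indepN (v : T) (X : {set T}) : indepS e [set u in X | e v u].
Proof.
move=> a b; rewrite !inE => /andP[_ ha] /andP[_ hb]; apply/negP => hab.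
by apply: (@etri v a b); rewrite ha hab hb.
Qed.

Lemma indepU1 (v : T) (S : {set T}) : indepS e S -> (forall u, u \in S -> ~~ e v u) -> indepS e (v |: S).
Proof.
move=> hS hv a b; rewrite !inE => /orP[/eqP->|ha] /orP[/eqP->|hb].
- exact: eirr.
- exact: hv.
- by rewrite esym; apply: hv.
- exact: hS.
Qed.

Lemma ramsey k (X : {set T}) : tri k <= #|X| ->
  exists S : {set T}, [/\ S \subset X, indepS e S & k <= #|S|].
Proof.
elim: k X => [|k IH] X hX.
  by exists set0; split => //; [exact: sub0set | move=> i j; rewrite inE].
have /set0Pn [v vX] : X != set0 by rewrite -card_gt0; move: hX => /=; lia.
set N := [set u in X | e v u].
case: (leqP k.+1 #|N|) => hN.
  exists N; split => //; last exact: indepN.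
  by apply/subsetP => u; rewrite inE => /andP[].
set W := (X :\ v) :\: N.
have hW : tri k <= #|W|.
  have h1 := cardsD1 v X; rewrite vX in h1.
  have h2 := cardsID N (X :\ v).
  have h3 : #|(X :\ v) :&: N| <= #|N| by apply: subset_leq_card; apply: subsetIr.
  move: hX => /=; rewrite -/W in h2; lia.
have [S' [sS' iS' kS']] := IH W hW.
have vS' : v \notin S'.
  by apply/negP => /(subsetP sS'); rewrite !inE eqxx /= andbF.
exists (v |: S'); split.
- apply/subsetP => u; rewrite !inE => /orP[/eqP->//|/(subsetP sS')].
  by rewrite !inE => /andP[_ /andP[_ ->]].
- apply: indepU1 => // u /(subsetP sS'); rewrite !inE => /andP[hu /andP[_ uX]].
  by move: hu; rewrite uX.
- by rewrite cardsU1 vS'.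
Qed.
End R.

Section Par.
Variables (n : nat) (e : rel 'I_n).
Hypothesis esym : forall x y, e x y = e y x.
Hypothesis eirr : forall x, ~~ e x x.

Lemma deg_even : ~~ odd (\sum_i #|[set j | e i j]|).
Proof.
have -> : \sum_i #|[set j | e i j]| = \sum_i \sum_j (e i j : nat).
  apply: eq_bigr => i _; rewrite -sum1_card big_mkcond /=.
  by apply: eq_bigr => j _; rewrite inE; case: (e i j).
rewrite pair_bigA /= (bigID (fun p : 'I_n * 'I_n => p.1 < p.2)) /=.
rewrite [X in _ + X](bigID (fun p : 'I_n * 'I_n => p.2 < p.1)) /=.
rewrite [X in _ + (_ + X)]big1; last first.
  move=> [a b] /= /andP[]; rewrite -!leqNgt => h1 h2.
  have -> : a = b by apply: val_inj; apply/eqP; rewrite eqn_leq h1 h2.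
  by rewrite (negbTE (eirr b)).
have E1 : \sum_(p : 'I_n * 'I_n | ~~ (p.1 < p.2) && (p.2 < p.1)) (e p.1 p.2 : nat)
    = \sum_(p : 'I_n * 'I_n | p.2 < p.1) (e p.1 p.2 : nat).
  apply: eq_bigl => -[a b] /=.
  case: (boolP (b < a)) => h; rewrite ?andbT ?andbF //.
  by rewrite -leqNgt ltnW.
have E2 : \sum_(p : 'I_n * 'I_n | p.2 < p.1) (e p.1 p.2 : nat)
    = \sum_(p : 'I_n * 'I_n | p.1 < p.2) (e p.1 p.2 : nat).
  rewrite (reindex_inj (h := fun p : 'I_n * 'I_n => (p.2, p.1))) /=; last first.
    by move=> [a b] [c d] /= [-> ->].
  by apply: eq_bigr => -[a b] _ /=; rewrite esym.
rewrite E1 E2.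
by rewrite addn0 addnn odd_double.
Qed.
End Par.

Lemma r34 (e : rel 'I_9) : (forall x y, e x y = e y x) -> (forall x, ~~ e x x) ->
  (forall x y z, ~ [&& e x y, e y z & e x z]) ->
  exists S, indepS e S /\ 4 <= #|S|.
Proof.
move=> esym eirr etri.
case: (boolP [exists v, 4 <= #|[set j in [set: 'I_9] | e v j]|]) => [/existsP[v hv]|h4].
  by exists [set j in [set: 'I_9] | e v j]; split => //; apply: indepN.
case: (boolP [exists v, #|[set j in [set: 'I_9] | e v j]| <= 2]) => [/existsP[v hv]|h2].
  set N := [set j in [set: 'I_9] | e v j].
  have hX : tri 3 <= #|~: (v |: N)|.
    have hv' : #|N| <= 2 := hv.
    have := cardsC (v |: N); rewrite cardsU1 card_ord /=.
    move: (#|N|) (#|~: (v |: N)|) (v \notin N) hv' => a b [] /=; lia.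
  have [S' [sS' iS' kS']] := ramsey esym eirr etri hX.
  have vS' : v \notin S'.
    by apply/negP => /(subsetP sS'); rewrite !inE eqxx.
  exists (v |: S'); split; last by rewrite cardsU1 vS'.
  apply: indepU1 => // u /(subsetP sS'); rewrite !inE negb_or => /andP[_ ->].
  done.
exfalso.
have h3 : forall v, #|[set j | e v j]| = 3.
  move=> v; move/existsPn: h4 => /(_ v); move/existsPn: h2 => /(_ v).
  have -> : [set j in [set: 'I_9] | e v j] = [set j | e v j].
    by apply/setP => j; rewrite !inE.
  move: (#|[set j | e v j]|) => a; lia.
have := deg_even esym eirr.
by rewrite (eq_bigr (fun _ => 3)) // sum_nat_const card_ord.
Qed.

Definition adj (i j : nat) : bool := ((i + 13 - j) %% 13) \in [:: 1; 5; 8; 12].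
Definition r12 := iota 0 12.
Definition ok2 i j := (i != j) && ~~ adj i j.
Definition chk_sym := all (fun i => all (fun j => adj i j == adj j i) r12) r12.
Definition chk_tri := all (fun i => all (fun j => all (fun k =>
   ~~ [&& adj i j, adj j k & adj i k]) r12) r12) r12.
Definition chk5 := all (fun a => all (fun b => if ok2 a b then
  all (fun c => if ok2 a c && ok2 b c then
  all (fun d => if [&& ok2 a d, ok2 b d & ok2 c d] then
  all (fun e => ~~ [&& ok2 a e, ok2 b e, ok2 c e & ok2 d e]) r12
  else true) r12 else true) r12 else true) r12) r12.

Lemma chk_sym_ok : chk_sym. Proof. by vm_compute. Qed.
Lemma chk_tri_ok : chk_tri. Proof. by vm_compute. Qed.
Lemma chk5_ok : chk5. Proof. by vm_compute. Qed.

Opaque adj.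
Lemma mI x : x < 12 -> x \in r12. Proof. by rewrite mem_iota. Qed.

Lemma adj_sym i j : i < 12 -> j < 12 -> adj i j = adj j i.
Proof.
move=> hi hj; move: chk_sym_ok => /allP/(_ i (mI hi))/allP/(_ j (mI hj)).
by move/eqP.
Qed.

Lemma adj_tri i j k : i < 12 -> j < 12 -> k < 12 -> ~~ [&& adj i j, adj j k & adj i k].
Proof.
move=> hi hj hk.
by move: chk_tri_ok => /allP/(_ i (mI hi))/allP/(_ j (mI hj))/allP/(_ k (mI hk)).
Qed.

Lemma ifT' (b x : bool) : b -> (if b then x else true) -> x.
Proof. by move=> ->. Qed.

Lemma no5 a b c d e : a < 12 -> b < 12 -> c < 12 -> d < 12 -> e < 12 ->
  ok2 a b -> ok2 a c -> ok2 b c -> ok2 a d -> ok2 b d -> ok2 c d ->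
  ok2 a e -> ok2 b e -> ok2 c e -> ok2 d e -> False.
Proof.
move=> ha hb hc hd he hab hac hbc had hbd hcd hae hbe hce hde.
move: chk5_ok; rewrite /chk5 => /allP/(_ a (mI ha))/allP/(_ b (mI hb)).
move=> /(ifT' hab) /allP/(_ c (mI hc)).
have h3 : ok2 a c && ok2 b c by rewrite hac hbc.
have h4 : [&& ok2 a d, ok2 b d & ok2 c d] by rewrite had hbd hcd.
move=> /(ifT' h3) /allP/(_ d (mI hd)) /(ifT' h4).
by move=> /allP/(_ e (mI he)); rewrite hae hbe hce hde.
Qed.

Section Main.
Variables (V : countType) (E : rel V).
Hypothesis Esym : forall x y, E x y = E y x.
Hypothesis Eirr : forall x, ~~ E x x.
Hypothesis Etri : forall x y z, ~ [&& E x y, E y z & E x z].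
Hypothesis Hext : henson3_extension E.

Lemma D_from_indep n (x : 'I_n -> V) k (S : {set 'I_n}) :
  indepS (fun i j => E (x i) (x j)) S -> k <= #|S| ->
  exists y, k <= #|[pred i : 'I_n | E (x i) y]|.
Proof.
move=> hI hk.
case: (@Hext [seq x i | i <- enum S] [::]).
- by move=> ? _; rewrite in_nil.
- move=> a b /mapP[i iS ->] /mapP[j jS ->]; rewrite !mem_enum in iS jS; exact: (hI i j iS jS).
move=> y [_ _ hA _]; exists y; apply: leq_trans hk _; apply: subset_leq_card.
apply/subsetP => i iS; rewrite inE /=; apply: hA; apply: map_f; by rewrite mem_enum.
Qed.

Lemma D_gen n (x : 'I_n -> V) k :
  (forall e : rel 'I_n, (forall i j, e i j = e j i) -> (forall i, ~~ e i i) ->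
     (forall i j l, ~ [&& e i j, e j l & e i l]) ->
     exists S : {set 'I_n}, indepS e S /\ k <= #|S|) ->
  exists y, k <= #|[pred i : 'I_n | E (x i) y]|.
Proof.
move=> H.
have [S [hS hk]] := H (fun i j => E (x i) (x j)) (fun i j => Esym _ _)
  (fun i => Eirr _) (fun i j l => Etri (x := x i) (y := x j) (z := x l)).
exact: D_from_indep hS hk.
Qed.

Lemma D3 : prop_D E 3.
Proof.
move=> m /andP[m1 m3].
case: m m1 m3 => [|[|[|[|m]]]] // _ _ x; apply: D_gen => e esym eirr etri.
- have [S [_ hS hk]] := ramsey esym eirr etri (X := setT) (k := 2) ltac:(by rewrite cardsT card_ord).
  by exists S.
- have [S [_ hS hk]] := ramsey esym eirr etri (X := setT) (k := 3) ltac:(by rewrite cardsT card_ord).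
  by exists S.
- exact: r34 esym eirr etri.
Qed.

Lemma ltS_case k n : k < n.+1 -> k = n \/ k < n.
Proof. by rewrite ltnS leq_eqVlt => /orP[/eqP|]; auto. Qed.

Lemma embed n : n <= 12 -> exists f : nat -> V,
  (forall i j, i < n -> j < n -> i != j -> E (f i) (f j) = adj i j) /\
  (forall i j, i < n -> j < n -> f i = f j -> i = j).
Proof.
have [v0 _] := @Hext [::] [::] (fun _ _ => isT) (fun a b ha => ltac:(by [])).
elim: n => [|n IH] hn.
  by exists (fun _ => v0); split.
have [f [fE finj]] := IH (ltnW hn).
have hn12 : n < 12 := hn.
set A := [seq f j | j <- iota 0 n & adj j n].
set B := [seq f j | j <- iota 0 n & ~~ adj j n].
have [v [vA vB hA hB]] : exists v, [/\ v \notin A, v \notin B,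
                  (forall a, a \in A -> E a v) &
                  (forall b, b \in B -> ~~ E b v)].
  apply: Hext.
  - move=> w /mapP[j]; rewrite mem_filter mem_iota => /andP[aj /andP[_ jn]] ->.
    apply/mapP => -[j']; rewrite mem_filter mem_iota => /andP[aj' /andP[_ jn']].
    move/(finj _ _ jn jn') => ejj; move: aj'; by rewrite -ejj aj.
  - move=> a b /mapP[j]; rewrite mem_filter mem_iota => /andP[aj /andP[_ jn]] ->.
    move=> /mapP[j']; rewrite mem_filter mem_iota => /andP[aj' /andP[_ jn']] ->.
    case: (eqVneq j j') => [->|ne]; first exact: Eirr.
    rewrite fE //; apply/negP => hjj.
    by move: (adj_tri (ltn_trans jn hn12) (ltn_trans jn' hn12) hn12); rewrite hjj aj aj'.
have Ev j : j < n -> E (f j) v = adj j n.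
  move=> jn; case: (boolP (adj j n)) => h.
    by apply: hA; apply/mapP; exists j; rewrite // mem_filter h mem_iota.
  by apply/negbTE/hB; apply/mapP; exists j; rewrite // mem_filter h mem_iota.
have vf j : j < n -> v <> f j.
  move=> jn evf; case: (boolP (adj j n)) => h.
    by move: vA; rewrite evf; apply/negP/negPn/mapP; exists j; rewrite // mem_filter h mem_iota.
  by move: vB; rewrite evf; apply/negP/negPn/mapP; exists j; rewrite // mem_filter h mem_iota.
exists (fun i => if i == n then v else f i); split.
- move=> i j; move=> /ltS_case[->|hi] /ltS_case[->|hj] ne.
  + by rewrite eqxx in ne.
  + rewrite eqxx (ltn_eqF hj) Esym Ev // adj_sym //; exact: ltn_trans hj hn12.
  + by rewrite eqxx (ltn_eqF hi) Ev.
  + by rewrite (ltn_eqF hi) (ltn_eqF hj) fE.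
- move=> i j; move=> /ltS_case[->|hi] /ltS_case[->|hj] //.
  + by rewrite eqxx (ltn_eqF hj) => /vf; move/(_ hj).
  + by rewrite eqxx (ltn_eqF hi) => /esym /vf; move/(_ hi).
  + rewrite (ltn_eqF hi) (ltn_eqF hj); exact: finj.
Qed.

Lemma notD4 : ~ prop_D E 4.
Proof.
move=> HD.
have [f [fE _]] := embed (leqnn 12).
have [y hy] := HD 4 isT (fun i : 'I_12 => f i).
set P := [pred i : 'I_(3 * 4) | E (f i) y] in hy.
have hpair : forall a b : 'I_12, a \in P -> b \in P -> a != b -> ok2 a b.
  move=> a b ha hb ne; rewrite /ok2 ne /=; apply/negP => hab.
  apply: (Etri (x := f a) (y := f b) (z := y)).
  have ha' : E (f a) y := ha.
  have hb' : E (f b) y := hb.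
  rewrite fE ?ltn_ord ?ha' ?hb' ?hab //.
set s := enum P.
have us : uniq s := enum_uniq _.
have ss : 5 <= size s by rewrite -cardE.
pose g k := nth ord0 s k.
have gP k : k < 5 -> g k \in P.
  by move=> hk; rewrite -mem_enum; apply: mem_nth; apply: leq_trans ss.
have gne k l : k < 5 -> l < 5 -> k != l -> g k != g l.
  by move=> hk hl; rewrite nth_uniq //; apply: leq_trans ss.
have G k l : k < 5 -> l < 5 -> k != l -> ok2 (g k) (g l).
  move=> hk hl kl; apply: hpair; [exact: gP | exact: gP | exact: gne].
by apply: (@no5 (g 0) (g 1) (g 2) (g 3) (g 4)); rewrite ?ltn_ord //; apply: G.
Qed.
End Main.

Theorem theorem5p3 (V : countType) (E : rel V) :
  is_henson_U3 E -> prop_D E 3 /\ ~ prop_D E 4.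
Proof.
move=> [[Esym Eirr] Etri Hext]; split.
- exact: D3.
- exact: notD4.
Qed.
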